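(* Let $G$ be a finite group with $\pi_e(G)\subseteq\{1,2,3,4,6\}$ that has precisely three cyclic subgroups of order $6$. If there exist two cyclic subgroups of order $6$ of $G$ whose intersection has order $3$, then the intersection of any two distinct cyclic subgroups of order $6$ of $G$ has order $3$.
   Context: For a finite group $G$, $\pi_e(G)$ denotes the set of orders of elements of $G$. *)

(* Defs.v *)
From mathcomp Require Import all_boot all_fingroup.
Set Implicit Arguments. Unset Strict Implicit. Unset Printing Implicit Defensive.
Local Open Scope group_scope.

Definition elt_orders (gT : finGroupType) (G : {set gT}) : pred nat :=
  fun n => [exists x in G, #[x] == n].

Definition cyc6 (gT : finGroupType) (G : {set gT}) : {set {set gT}} :=
  [set (<[x]> : {set gT}) | x in G & #[x] == 6%N].

(* Main.v *)
Require Import Defs.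
From mathcomp Require Import all_boot all_fingroup all_solvable.
Local Open Scope group_scope.

Section Helpers.
Variable gT : finGroupType.
Implicit Types a t s z : gT.

Lemma ord6 a t : commute a t -> #[a] = 3%N -> #[t] = 2%N -> #[a * t] = 6%N.
Proof. by move=> c oa ot; rewrite orderM // oa ot. Qed.

Lemma pow3 a t : commute a t -> #[a] = 3%N -> #[t] = 2%N -> (a * t) ^+ 3 = t.
Proof.
move=> c oa ot; rewrite expgMn // (expgS t 2) -{2}ot expg_order mulg1.
by rewrite -oa expg_order mul1g.
Qed.

Lemma pow4 a t : commute a t -> #[a] = 3%N -> #[t] = 2%N -> (a * t) ^+ 4 = a.
Proof.
move=> c oa ot.
have a3 : a ^+ 3 = 1 by rewrite -oa expg_order.
have t2 : t ^+ 2 = 1 by rewrite -ot expg_order.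
by rewrite expgMn // (expgS a 3) a3 mulg1 (_ : 4 = 2 * 2)%N // expgM t2 expg1n mulg1.
Qed.

Arguments pow3 [a t]. Arguments pow4 [a t]. Arguments ord6 [a t].
Lemma memA a t : commute a t -> #[a] = 3%N -> #[t] = 2%N -> a \in <[a * t]>.
Proof. by move=> c oa ot; rewrite -{1}(pow4 c oa ot) mem_cycle. Qed.

Lemma inj6 a t s : commute a t -> commute a s -> #[a] = 3%N -> #[t] = 2%N ->
  #[s] = 2%N -> <[a * t]> = <[a * s]> -> t = s.
Proof.
move=> ct cs oa ot os E.
have : a * s \in <[a * t]> by rewrite E cycle_id.
case/cycleP=> k ek.
have : s = t ^+ k by rewrite -(pow3 cs oa os) ek -expgM mulnC expgM pow3.
rewrite -expg_mod_order ot modn2; case: (odd k) => /= e.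
  by rewrite e expg1.
by move: os; rewrite e expg0 order1.
Qed.

Lemma cyc_eq z a : #[z] = 6%N -> a \in <[z]> -> #[a] = 3%N ->
  [/\ commute a (z ^+ 3), #[z ^+ 3] = 2%N & <[z]> = <[a * z ^+ 3]>].
Proof.
move=> oz az oa.
have o3 : #[z ^+ 3] = 2%N by rewrite orderXdiv oz.
have c : commute a (z ^+ 3).
  by case/cycleP: az => k ->; apply: commuteX2.
split=> //; apply/esym/eqP; rewrite eqEcard cycle_subG groupM ?mem_cycle //=.
by rewrite -!orderE (ord6 c oa o3) oz.
Qed.

End Helpers.
Arguments cyc_eq [gT z a]. Arguments inj6 [gT a t s]. Arguments memA [gT a t].

Lemma ord2 (gT : finGroupType) (w : gT) : w ^+ 2 = 1 -> w != 1 -> #[w] = 2%N.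
Proof.
move=> e n; have d : #[w] %| 2 by rewrite order_dvdn e.
have n1 : #[w] != 1%N by rewrite order_eq1.
have := order_gt0 w; move: d n1; case: #[w] => [|[|[|k]]] //.
Qed.

Theorem lemma3p2 (gT : finGroupType) (G : {group gT}) :
  (forall n, elt_orders G n -> n \in [:: 1; 2; 3; 4; 6]%N) ->
  #|cyc6 G| = 3%N ->
  (exists A B, [/\ A \in cyc6 G, B \in cyc6 G & #|A :&: B| = 3%N]) ->
  forall A B, A \in cyc6 G -> B \in cyc6 G -> A != B -> #|A :&: B| = 3%N.
Proof.
move=> _ card3 [A0 [B0 [HA0 HB0 HAB]]] A B HA HB neqAB.
case/imsetP: HA0 => x; rewrite inE => /andP[xG /eqP ox] E0; subst A0.
case/imsetP: HB0 => y; rewrite inE => /andP[yG /eqP oy] E0; subst B0.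
set a := x ^+ 2.
have oa : #[a] = 3%N by rewrite /a orderXdiv ox.
have Pa : <[a]> = <[x]> :&: <[y]>.
  apply/eqP; rewrite -[_ :&: _]/(gval (<[x]> :&: <[y]>)%G).
  rewrite (eq_subG_cyclic (cycle_cyclic x)) ?cycle_subG ?mem_cycle ?subsetIl //.
  by rewrite -orderE oa HAB.
have ax : a \in <[x]> by rewrite mem_cycle.
have ay : a \in <[y]> by have := cycle_id a; rewrite Pa inE => /andP[].
have [c1 o1 E1] := cyc_eq ox ax oa.
have [c2 o2 E2] := cyc_eq oy ay oa.
set t1 := x ^+ 3 in c1 o1 E1; set t2 := y ^+ 3 in c2 o2 E2.
have t1G : t1 \in G by rewrite groupX.
have t2G : t2 \in G by rewrite groupX.
have aG : a \in G by rewrite groupX.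
clearbody t1 t2.
have ne12 : t1 != t2.
  by apply/eqP=> e; move: HAB; rewrite E1 E2 e setIid -orderE ord6.
have ne1 : forall t : gT, #[t] = 2%N -> t != 1.
  by move=> t ot; apply/eqP=> e; move: ot; rewrite e order1.
have inv2 : forall t : gT, #[t] = 2%N -> t^-1 = t.
  by move=> t ot; apply/eqP; rewrite eq_invg_mul -expg2 -ot expg_order.
have [t3 [t3G o3 c3 n31 n32]] : exists t3, [/\ t3 \in G, #[t3] = 2%N,
    commute a t3, t3 != t1 & t3 != t2].
  have [e|ne] := eqVneq (t1 ^ t2) t1.
    have ct : commute t1 t2.
      move: e; rewrite conjgE (inv2 _ o2) => e.
      have t22 : t2 * t2 = 1 by rewrite -expg2 -o2 expg_order.
      by rewrite /commute -{1}e -!mulgA t22 mulg1.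
    exists (t1 * t2); split; rewrite ?groupM //.
    - apply: ord2; first by rewrite expgMn // -{1}o1 -o2 !expg_order mulg1.
      by rewrite -eq_invg_mul (inv2 _ o1).
    - exact: commuteM.
    - by rewrite -{2}[t1]mulg1 (inj_eq (mulgI t1)) ne1.
    - by rewrite -{2}[t2]mul1g (inj_eq (mulIg t2)) ne1.
  exists (t1 ^ t2); split; rewrite ?groupJ ?orderJ //.
  - by rewrite conjgE; apply: commuteM; [apply: commuteV | apply: commuteM].
  - apply/eqP=> e; move/eqP: ne12; apply; apply: (conjg_inj t2).
    by rewrite e conjgE mulKg.
have C1in : <[x]> \in cyc6 G by apply/imsetP; exists x; rewrite // inE xG ox.
have C2in : <[y]> \in cyc6 G by apply/imsetP; exists y; rewrite // inE yG oy.
have C3in : <[a * t3]> \in cyc6 G.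
  by apply/imsetP; exists (a * t3); rewrite // inE groupM // ord6.
have n13 : <[x]> != <[a * t3]>.
  by apply/eqP; rewrite E1 => /inj6 e; move/eqP: n31; apply; rewrite e.
have n23 : <[y]> != <[a * t3]>.
  by apply/eqP; rewrite E2 => /inj6 e; move/eqP: n32; apply; rewrite e.
have n12 : <[x]> != <[y]>.
  by apply/eqP=> e; move: HAB; rewrite e setIid -orderE oy.
have Seq : [set <[x]>; <[y]>; <[a * t3]>] =i cyc6 G.
  apply/subset_cardP.
    by rewrite card3 -setUA cardsU1 cards2 !inE negb_or n12 n13 n23.
  by apply/subsetP=> C; rewrite !inE; case/orP=> [/orP[]|] /eqP->.
have Ha : forall C, C \in cyc6 G -> a \in C.
  move=> C; rewrite -Seq !inE => /orP[/orP[]|] /eqP->.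
  - by rewrite mem_cycle.
  - exact: ay.
  - exact: memA.
have aA := Ha _ HA; have aB := Ha _ HB.
case/imsetP: HA => u; rewrite inE => /andP[uG /eqP ou] EA.
case/imsetP: HB => v; rewrite inE => /andP[vG /eqP ov] EB.
rewrite EA EB in aA aB neqAB *.
set I := (<[u]> :&: <[v]>)%G.
have d : #|I| %| 6 by rewrite -ou orderE cardSg ?subsetIl.
have ge3 : 3 <= #|I|.
  by rewrite -oa orderE subset_leq_card // cycle_subG inE aA aB.
have n6 : #|I| != 6%N.
  apply/eqP=> e; move/eqP: neqAB; apply.
  have : <[u]> :&: <[v]> == <[u]>.
    rewrite eqEcard subsetIl -orderE ou -e /=; exact: leqnn.
  move/eqP=> e2; apply/eqP; rewrite eqEcard -{1}e2 subsetIr -!orderE ou ov.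
  by [].
rewrite -[_ :&: _]/(gval I).
move: d ge3 n6; case: #|I| => [|[|[|[|[|[|[|k]]]]]]] //.
Qed.
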